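(* Let $X_1,\dots,X_n$ be variables with ranges $D_1,\dots,D_n$ and let $A_1,\dots,A_m$ be events (sets of full assignments), $A_i$ depending only on the variables indexed by $\mathrm{vbl}(A_i)\subseteq[n]$, with dependency graph $G$ on $[m]$ (distinct $i,j$ adjacent iff $\mathrm{vbl}(A_i)\cap\mathrm{vbl}(A_j)\neq\emptyset$). Let $\sigma$ be an assignment and let $\sigma'$ be another assignment such that $\mathrm{Bad}(\sigma')\subseteq\mathrm{Res}(\sigma)$ and $\sigma,\sigma'$ agree on all variables in $\mathrm{vbl}(\mathrm{Res}(\sigma))$. Then $\mathrm{Res}(\sigma')=\mathrm{Res}(\sigma)$.
   Context: Notation: $\mathrm{Bad}(\sigma)=\{i:\sigma\in A_i\}$; for $S\subseteq[m]$, $\partial S=\{i\notin S:\ i\text{ adjacent in }G\text{ to some }j\in S\}$ and $\mathrm{vbl}(S)=\bigcup_{i\in S}\mathrm{vbl}(A_i)$. We write $A_i\cap\sigma_S=\emptyset$ if either $\mathrm{vbl}(A_i)\cap\mathrm{vbl}(S)=\emptyset$, or no assignment agreeing with $\sigma$ on $\mathrm{vbl}(A_i)\cap\mathrm{vbl}(S)$ belongs to $A_i$; otherwise $A_i\cap\sigma_S\ne\emptyset$. $\mathrm{Res}(\sigma)$ is the output of the procedure: start with $R=\mathrm{Bad}(\sigma)$, $N=\emptyset$; while $\partial R\setminus N\neq\emptyset$, for each $i\in\partial R\setminus N$ (with $R$ the current set), put $i$ into $R$ if $A_i\cap\sigma_R\ne\emptyset$ and into $N$ otherwise; finally output $R$.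 *)

(* Defs.v *)
From mathcomp Require Import all_boot.
From mathcomp Require Import boolp.

Set Implicit Arguments.
Unset Strict Implicit.
Unset Printing Implicit Defensive.

Section LLL.
Variables (n m : nat) (D : 'I_n -> Type).

Definition assignment := forall k : 'I_n, D k.

Variables (A : 'I_m -> assignment -> Prop) (vbl : 'I_m -> {set 'I_n}).

Definition agree_on (S : {set 'I_n}) (s t : assignment) : Prop :=
  forall k, k \in S -> s k = t k.

Definition depends_only : Prop :=
  forall i s t, agree_on (vbl i) s t -> (A i s <-> A i t).

Definition vblS (S : {set 'I_m}) : {set 'I_n} := \bigcup_(i in S) vbl i.

Definition adj (i j : 'I_m) : bool := (i != j) && (vbl i :&: vbl j != set0).

Definition bdry (S : {set 'I_m}) : {set 'I_m} :=
  [set i | (i \notin S) && [exists j in S, adj i j]].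

Definition Bad (s : assignment) : {set 'I_m} := [set i | `[< A i s >]].

(* "A_i ∩ sigma_S ≠ ∅" *)
Definition meets (i : 'I_m) (s : assignment) (S : {set 'I_m}) : Prop :=
  (vbl i :&: vblS S != set0) /\
  exists t, agree_on (vbl i :&: vblS S) s t /\ A i t.

Definition res_step (s : assignment) (RN : {set 'I_m} * {set 'I_m}) (i : 'I_m) :=
  if `[< meets i s RN.1 >] then (i |: RN.1, RN.2) else (RN.1, i |: RN.2).

(* one iteration of the while loop: for each i in ∂R \ N (increasing order) *)
Definition res_round (s : assignment) (RN : {set 'I_m} * {set 'I_m}) :=
  foldl (res_step s) RN (enum (bdry RN.1 :\: RN.2)).

(* the while loop; each non-final round adds a new element to R ∪ N, so
   m.+1 rounds reach the fixed point (after which rounds do nothing). *)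
Definition Res (s : assignment) : {set 'I_m} :=
  (iter m.+1 (res_round s) (Bad s, set0)).1.

End LLL.

(* Main.v *)
Require Import Defs.
From mathcomp Require Import all_boot.
From mathcomp Require Import boolp.

Set Implicit Arguments.
Unset Strict Implicit.
Unset Printing Implicit Defensive.

Section Aux.
Variables (n m : nat) (D : 'I_n -> Type).
Variables (A : 'I_m -> assignment D -> Prop) (vbl : 'I_m -> {set 'I_n}).
Implicit Types (RN : {set 'I_m} * {set 'I_m}) (i : 'I_m) (X : {set 'I_m}) (F : {set 'I_m}) (s : assignment D).

Lemma step_mono s RN i : RN.1 \subset (res_step A vbl s RN i).1.
Proof. rewrite /res_step; case: ifP => _ /=; [exact: subsetUr | exact: subxx]. Qed.

Lemma foldl_mono s l RN : RN.1 \subset (foldl (res_step A vbl s) RN l).1.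
Proof.
elim: l RN => [|x l IH] RN /=; first exact: subxx.
exact: subset_trans (step_mono s RN x) (IH _).
Qed.

Lemma iter_mono s k RN : (iter k (res_round A vbl s) RN).1 \subset
  (iter k.+1 (res_round A vbl s) RN).1.
Proof. rewrite [iter k.+1 _ _]/= /res_round; exact: foldl_mono. Qed.

Lemma iter_mono2 s k (l : nat) RN : k <= l -> (iter k (res_round A vbl s) RN).1 \subset
  (iter l (res_round A vbl s) RN).1.
Proof.
elim: l => [|l IH]; first by rewrite leqn0 => /eqP ->; exact: subxx.
rewrite leq_eqVlt => /orP [/eqP -> | ]; first exact: subxx.
move=> /IH H; exact: subset_trans H (iter_mono _ _ _).
Qed.

Lemma vblS_mono X F : X \subset F -> vblS vbl X \subset vblS vbl F.
Proof.
move=> /subsetP XF; apply/subsetP => k /bigcupP [i iX ki].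
apply/bigcupP; exists i => //; exact: XF.
Qed.

Variables (F : {set 'I_m}) (s s' : assignment D).
Hypothesis Hag : agree_on (vblS vbl F) s s'.

Lemma meets_eq i X : X \subset F -> meets A vbl i s X = meets A vbl i s' X.
Proof.
move=> XF; have Hs := vblS_mono XF.
have ag : agree_on (vbl i :&: vblS vbl X) s s'.
  move=> k; rewrite inE => /andP [_ kX]; apply: Hag; exact: (subsetP Hs).
apply: propext; rewrite /meets; split => -[h [t [h1 h2]]]; split => //;
  exists t; split => // k kI; rewrite -h1 //; [by rewrite ag | by rewrite ag].
Qed.

Lemma step_eq RN i : RN.1 \subset F -> res_step A vbl s RN i = res_step A vbl s' RN i.
Proof. by move=> H; rewrite /res_step meets_eq. Qed.

Lemma foldl_eq l RN : (foldl (res_step A vbl s) RN l).1 \subset F ->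
  foldl (res_step A vbl s) RN l = foldl (res_step A vbl s') RN l.
Proof.
elim: l RN => [|x l IH] RN //= H.
have H1 : RN.1 \subset F.
  apply: subset_trans H; exact: subset_trans (step_mono s RN x) (foldl_mono _ _ _).
rewrite -step_eq //; exact: IH.
Qed.

Lemma iter_eq k RN : (iter k (res_round A vbl s) RN).1 \subset F ->
  iter k (res_round A vbl s) RN = iter k (res_round A vbl s') RN.
Proof.
elim: k => [|k IH] //= H.
have H1 := subset_trans (iter_mono s k RN) H.
rewrite -IH //; rewrite /res_round; apply: foldl_eq; exact: H.
Qed.

End Aux.

Theorem lemma24 (n m : nat) (D : 'I_n -> Type)
  (A : 'I_m -> assignment D -> Prop) (vbl : 'I_m -> {set 'I_n})
  (Hdep : depends_only A vbl) (s s' : assignment D) :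
  Bad A s' \subset Res A vbl s ->
  agree_on (vblS vbl (Res A vbl s)) s s' ->
  Res A vbl s' = Res A vbl s.
Proof.
move=> Hb Hag.
have HbR : Bad A s \subset Res A vbl s.
  have := @iter_mono2 _ _ _ A vbl s 0 m.+1 (Bad A s, set0) isT; by [].
have EB : Bad A s' = Bad A s.
  apply/setP => i.
  case iF: (i \in Res A vbl s).
    have ag : agree_on (vbl i) s s'.
      move=> k ki; apply: Hag; apply/bigcupP; by exists i.
    rewrite !inE; have [h1 h2] := Hdep i s s' ag.
    apply/idP/idP => /asboolP h; apply/asboolP; [exact: h2 | exact: h1].
  apply/idP/idP => h.
    by rewrite (subsetP Hb _ h) in iF.
  by rewrite (subsetP HbR _ h) in iF.
rewrite /Res EB -(iter_eq Hag) //; exact: subxx.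
Qed.
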